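(* Let $k\ge 3$ and let $a<b$ be integers. Let $S=\{a=p_1<p_2<\dots<p_{k-1}<p_k=b\}$ and let $a<q_2<\dots<q_{k-1}<b$ be integers with $p_j\le q_j$ for all $2\le j\le k-1$. Let $D=\{a,q_2,\dots,q_{k-1},b\}$ and suppose $\lambda_B(D)\preceq\lambda_A(D)$, where $A=a$, $B=b$. Suppose $2\le i\le k-1$ is such that $p_i<q_i$ and $p_i+1\notin S$, and let $S^{new}=(S\setminus\{p_i\})\cup\{p_i+1\}$. If $S^{new}\neq D$, then $\lambda_B(S^{new})\prec\lambda_A(S^{new})$.
   Context: For a finite set $S\subset\mathbb{Z}$ with $a=\min S$, $b=\max S$, set $L=b-a+1$; $\lambda_A(S)=a_1\cdots a_L$ with $a_i=1$ iff $a+i-1\in S$, and $\lambda_B(S)=b_1\cdots b_L$ with $b_i=1$ iff $b-i+1\in S$. For binary strings of equal length, $\prec$ (resp. $\preceq$) denotes strict (resp. non-strict) lexicographic order with $0<1$. (Here $S$ models robots on a line with head at $a$, tail at $b$, the inner robot $r_j$ at $p_j$ having target $q_j$.) *)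

(* Defs.v *)
(* finite sets of integers represented by lists of Z
   (only membership matters). *)
From Stdlib Require Import ZArith List Bool.
Import ListNotations.
Open Scope Z_scope.

Definition smin (s : list Z) : Z := fold_left Z.min s (hd 0 s).
Definition smax (s : list Z) : Z := fold_left Z.max s (hd 0 s).

Definition memb (s : list Z) (x : Z) : bool := existsb (Z.eqb x) s.

Definition slen (s : list Z) : nat := Z.to_nat (smax s - smin s + 1).

(* lambda_A(S) = a_1 ... a_L, a_i = 1 iff a + i - 1 in S  (i from 1) *)
Definition lamA (s : list Z) : list bool :=
  map (fun n : nat => memb s (smin s + Z.of_nat n)) (seq 0 (slen s)).

(* lambda_B(S) = b_1 ... b_L, b_i = 1 iff b - i + 1 in S *)
Definition lamB (s : list Z) : list bool :=
  map (fun n : nat => memb s (smax s - Z.of_nat n)) (seq 0 (slen s)).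

Fixpoint lexlt (u v : list bool) : Prop :=
  match u, v with
  | x :: u', y :: v' => (x = false /\ y = true) \/ (x = y /\ lexlt u' v')
  | _, _ => False
  end.

Definition lexle (u v : list bool) : Prop := lexlt u v \/ u = v.

Definition sameset (s t : list Z) : Prop := forall x, In x s <-> In x t.

(* Main.v *)
Require Import Defs.
From Stdlib Require Import ZArith List Bool Lia Classical.
Import ListNotations.
Open Scope Z_scope.
Import ListNotations.

Lemma lex_trans : forall u v w, lexlt u v -> lexlt v w -> lexlt u w.
Proof.
  induction u as [|x u IH]; intros [|y v] [|z w]; simpl; try tauto.
  intros [[-> ->]|[-> H1]] [[H2 ->]|[-> H3]]; try discriminate; eauto.
Qed.

Lemma lexle_lt : forall u v w, lexle u v -> lexlt v w -> lexlt u w.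
Proof. intros u v w [H|<-] H2; [eapply lex_trans; eauto|auto]. Qed.

Lemma lex_char (f g : nat -> bool) : forall L s n, (s <= n < s + L)%nat ->
  (forall m, (s <= m < n)%nat -> f m = g m) -> f n = false -> g n = true ->
  lexlt (map f (seq s L)) (map g (seq s L)).
Proof.
  induction L as [|L IH]; intros s n Hn Hm Hf Hg; [lia|].
  simpl. destruct (Nat.eq_dec n s) as [->|Hne]; [left; auto|].
  right; split; [apply Hm; lia|]. apply (IH (S s) n); auto; try lia.
  intros; apply Hm; lia.
Qed.

Lemma memb_spec s z : memb s z = true <-> In z s.
Proof.
  unfold memb; rewrite existsb_exists; split.
  - intros [y [Hy He]]; apply Z.eqb_eq in He; subst; auto.
  - intros H; exists z; split; auto; apply Z.eqb_refl.
Qed.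

Lemma fold_min : forall l acc lo, lo <= acc -> (forall y, In y l -> lo <= y) ->
  lo <= fold_left Z.min l acc /\ fold_left Z.min l acc <= acc /\
  (forall y, In y l -> fold_left Z.min l acc <= y).
Proof.
  induction l as [|h l IH]; intros acc lo H1 H2; simpl; [repeat split; try lia; intros y []|].
  assert (E1 : lo <= Z.min acc h) by (apply Z.min_glb; [auto|apply H2; left; auto]).
  assert (E2 : forall y, In y l -> lo <= y) by (intros; apply H2; right; auto).
  destruct (IH (Z.min acc h) lo E1 E2) as [A [B C]].
  split; [auto|split; [lia|]]. intros y [<-|Hy]; [lia|auto].
Qed.

Lemma fold_max : forall l acc hi, acc <= hi -> (forall y, In y l -> y <= hi) ->
  fold_left Z.max l acc <= hi /\ acc <= fold_left Z.max l acc /\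
  (forall y, In y l -> y <= fold_left Z.max l acc).
Proof.
  induction l as [|h l IH]; intros acc hi H1 H2; simpl; [repeat split; try lia; intros y []|].
  assert (E1 : Z.max acc h <= hi) by (apply Z.max_lub; [auto|apply H2; left; auto]).
  assert (E2 : forall y, In y l -> y <= hi) by (intros; apply H2; right; auto).
  destruct (IH (Z.max acc h) hi E1 E2) as [A [B C]].
  split; [auto|split; [lia|]]. intros y [<-|Hy]; [lia|auto].
Qed.

Lemma smin_eq s lo : (forall y, In y s -> lo <= y) -> In lo s -> smin s = lo.
Proof.
  intros H Hin. unfold smin. destruct s as [|h t]; [destruct Hin|].
  destruct (fold_min (h::t) h lo (H h (or_introl eq_refl)) H) as [A [B C]].
  specialize (C lo Hin). simpl hd. lia.
Qed.

Lemma smax_eq s hi : (forall y, In y s -> y <= hi) -> In hi s -> smax s = hi.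
Proof.
  intros H Hin. unfold smax. destruct s as [|h t]; [destruct Hin|].
  destruct (fold_max (h::t) h hi (H h (or_introl eq_refl)) H) as [A [B C]].
  specialize (C hi Hin). simpl hd. lia.
Qed.

Lemma least (P : nat -> Prop) : forall N, P N -> exists n, P n /\ forall m, (m < n)%nat -> ~ P m.
Proof.
  intro N; induction N as [N IH] using (well_founded_induction lt_wf); intros HN.
  destruct (classic (exists m, (m < N)%nat /\ P m)) as [[m [Hm Pm]]|Hn].
  - exact (IH m Hm Pm).
  - exists N; split; auto. intros m Hm Pm; apply Hn; eauto.
Qed.

Lemma greatest (P : nat -> Prop) K j : P j -> (j <= K)%nat ->
  exists n, P n /\ (n <= K)%nat /\ forall m, (n < m <= K)%nat -> ~ P m.
Proof.
  intros Pj Hj.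
  destruct (least (fun m => (m <= K)%nat /\ P (K - m)%nat) (K - j)%nat) as [m0 [[H1 H2] H3]].
  { split; [lia|]. replace (K - (K - j))%nat with j by lia; auto. }
  exists (K - m0)%nat; split; [auto|split; [lia|]].
  intros m Hm Pm. apply (H3 (K - m)%nat); [lia|]. split; [lia|].
  replace (K - (K - m))%nat with m by lia; auto.
Qed.

Definition incr (f : nat -> Z) (k : nat) :=
  forall j j', (1 <= j)%nat -> (j < j')%nat -> (j' <= k)%nat -> f j < f j'.

Lemma incr_of_succ f k : (forall j, (1 <= j < k)%nat -> f j < f (S j)) -> incr f k.
Proof.
  intros H j j' H1 H2 H3. induction j' as [|j' IH]; [lia|].
  destruct (Nat.eq_dec j j') as [->|Hne]; [apply H; lia|].
  assert (f j < f j') by (apply IH; lia). specialize (H j' ltac:(lia)). lia.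
Qed.

Lemma incr_le f k : incr f k -> forall j j', (1 <= j)%nat -> (j <= j')%nat -> (j' <= k)%nat -> f j <= f j'.
Proof. intros H j j' H1 H2 H3. destruct (Nat.eq_dec j j'); [subst; lia|]. pose proof (H j j' H1 ltac:(lia) H3); lia. Qed.

Section Sides.
Variables (k : nat) (x d : nat -> Z) (mX mD : Z -> bool) (a b : Z).
Hypotheses (Hk : (1 <= k)%nat) (Hx1 : x 1%nat = a) (Hd1 : d 1%nat = a)
  (Hxk : x k = b) (Hdk : d k = b) (Ix : incr x k) (Id : incr d k)
  (Hle : forall j, (1 <= j <= k)%nat -> x j <= d j)
  (Hex : exists j, (1 <= j <= k)%nat /\ x j < d j)
  (HmX : forall z, mX z = true <-> exists j, (1 <= j <= k)%nat /\ z = x j)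
  (HmD : forall z, mD z = true <-> exists j, (1 <= j <= k)%nat /\ z = d j).

Lemma x_ge j : (1 <= j <= k)%nat -> a <= x j <= b.
Proof. intros H. pose proof (incr_le _ _ Ix 1 j ltac:(lia) ltac:(lia) ltac:(lia)).
  pose proof (incr_le _ _ Ix j k ltac:(lia) ltac:(lia) ltac:(lia)). lia. Qed.
Lemma d_ge j : (1 <= j <= k)%nat -> a <= d j <= b.
Proof. intros H. pose proof (incr_le _ _ Id 1 j ltac:(lia) ltac:(lia) ltac:(lia)).
  pose proof (incr_le _ _ Id j k ltac:(lia) ltac:(lia) ltac:(lia)). lia. Qed.

Lemma bool_iff (u v : bool) : (u = true <-> v = true) -> u = v.
Proof. destruct u, v; intuition. Qed.

Lemma sideA : lexlt (map (fun n => mD (a + Z.of_nat n)) (seq 0 (Z.to_nat (b - a + 1))))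
                    (map (fun n => mX (a + Z.of_nat n)) (seq 0 (Z.to_nat (b - a + 1)))).
Proof.
  destruct Hex as [j Hj].
  destruct (least (fun j => (1 <= j <= k)%nat /\ x j < d j) j Hj) as [j0 [[Hj0 Hlt] Hmin]].
  assert (Heq : forall j, (1 <= j < j0)%nat -> x j = d j).
  { intros j' Hj'. specialize (Hmin j' ltac:(lia)). specialize (Hle j' ltac:(lia)).
    destruct (Z.lt_ge_cases (x j') (d j')); [exfalso; apply Hmin; split; [lia|auto]|lia]. }
  pose proof (x_ge j0 Hj0).
  apply (lex_char _ _ _ 0 (Z.to_nat (x j0 - a))); [lia| | |].
  - intros m Hm. apply bool_iff. rewrite HmX, HmD.
    split; intros [j' [Hj' Hz]]; exists j'; split; auto;
      (destruct (Nat.lt_ge_cases j' j0); [pose proof (Heq j' ltac:(lia)); lia|]);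
      pose proof (incr_le _ _ Ix j0 j' ltac:(lia) ltac:(lia) ltac:(lia));
      pose proof (incr_le _ _ Id j0 j' ltac:(lia) ltac:(lia) ltac:(lia)); lia.
  - destruct (mD _) eqn:E; auto. apply HmD in E as [j' [Hj' Hz]].
    destruct (Nat.lt_ge_cases j' j0).
    + rewrite <- Heq in Hz by lia. pose proof (Ix j' j0 ltac:(lia) ltac:(lia) ltac:(lia)). lia.
    + destruct (Nat.eq_dec j' j0); [subst; lia|]. pose proof (Id j0 j' ltac:(lia) ltac:(lia) ltac:(lia)). lia.
  - apply HmX. exists j0; split; auto; lia.
Qed.

Lemma sideB : lexlt (map (fun n => mX (b - Z.of_nat n)) (seq 0 (Z.to_nat (b - a + 1))))
                    (map (fun n => mD (b - Z.of_nat n)) (seq 0 (Z.to_nat (b - a + 1)))).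
Proof.
  destruct Hex as [j Hj].
  destruct (greatest (fun j => (1 <= j <= k)%nat /\ x j < d j) k j Hj ltac:(lia)) as [j0 [[Hj0 Hlt] [_ Hmax]]].
  assert (Heq : forall j, (j0 < j <= k)%nat -> x j = d j).
  { intros j' Hj'. specialize (Hmax j' ltac:(lia)). specialize (Hle j' ltac:(lia)).
    destruct (Z.lt_ge_cases (x j') (d j')); [exfalso; apply Hmax; split; [lia|auto]|lia]. }
  pose proof (d_ge j0 Hj0).
  apply (lex_char _ _ _ 0 (Z.to_nat (b - d j0))); [lia| | |].
  - intros m Hm. apply bool_iff. rewrite HmX, HmD.
    split; intros [j' [Hj' Hz]]; exists j'; split; auto;
      (destruct (Nat.lt_ge_cases j0 j'); [pose proof (Heq j' ltac:(lia)); lia|]);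
      pose proof (incr_le _ _ Ix j' j0 ltac:(lia) ltac:(lia) ltac:(lia));
      pose proof (incr_le _ _ Id j' j0 ltac:(lia) ltac:(lia) ltac:(lia)); lia.
  - destruct (mX _) eqn:E; auto. apply HmX in E as [j' [Hj' Hz]].
    destruct (Nat.lt_ge_cases j0 j').
    + rewrite Heq in Hz by lia. pose proof (Id j0 j' ltac:(lia) ltac:(lia) ltac:(lia)). lia.
    + destruct (Nat.eq_dec j' j0); [subst; lia|]. pose proof (Ix j' j0 ltac:(lia) ltac:(lia) ltac:(lia)). lia.
  - apply HmD. exists j0; split; auto; lia.
Qed.
End Sides.
Open Scope Z_scope.
Theorem lemma2 (k : nat) (a b : Z) (p q : nat -> Z) (i : nat) :
  (3 <= k)%nat ->
  a < b ->
  p 1%nat = a -> p k = b ->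
  (forall j : nat, (1 <= j < k)%nat -> p j < p (S j)) ->
  a < q 2%nat -> q (k - 1)%nat < b ->
  (forall j : nat, (2 <= j < k - 1)%nat -> q j < q (S j)) ->
  (forall j : nat, (2 <= j <= k - 1)%nat -> p j <= q j) ->
  let S := map p (seq 1 k) in
  let D := a :: map q (seq 2 (k - 2)) ++ [b] in
  lexle (lamB D) (lamA D) ->
  (2 <= i <= k - 1)%nat ->
  p i < q i ->
  ~ In (p i + 1) S ->
  let Snew := (p i + 1) :: filter (fun x => negb (x =? p i)) S in
  ~ sameset Snew D ->
  lexlt (lamB Snew) (lamA Snew).
Proof.
  intros Hk Hab Hp1 Hpk Hps Hq2 Hqk Hqs Hpq S D HD Hi Hpqi HnS Snew Hns.
  set (x := fun j => if Nat.eqb j i then p i + 1 else p j).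
  set (d := fun j => if Nat.eqb j 1 then a else if Nat.eqb j k then b else q j).
  assert (Ip : incr p k) by (apply incr_of_succ; auto).
  assert (HinS : forall z, In z S <-> exists j, (1 <= j <= k)%nat /\ z = p j).
  { intros z. unfold S. rewrite in_map_iff. split.
    - intros [j [<- Hj]]. apply in_seq in Hj. exists j; split; auto; lia.
    - intros [j [Hj ->]]. exists j; split; auto. apply in_seq; lia. }
  assert (Ix : incr x k).
  { apply incr_of_succ. intros j Hj. unfold x.
    destruct (Nat.eqb_spec j i) as [Hji|Hne]; destruct (Nat.eqb_spec (Datatypes.S j) i) as [He|Hne2]; try lia.
    - subst j. assert (p i < p (Datatypes.S i)) by (apply Hps; lia).
      assert (p i + 1 <> p (Datatypes.S i)).
      { intros He. apply HnS. rewrite He. apply HinS. exists (Datatypes.S i); split; auto; lia. }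
      lia.
    - rewrite <- He. assert (p j < p (Datatypes.S j)) by (apply Hps; lia). lia.
    - apply Hps; lia. }
  assert (Id : incr d k).
  { apply incr_of_succ. intros j Hj. unfold d.
    destruct (Nat.eqb_spec j 1) as [H0|H1]; destruct (Nat.eqb_spec (Datatypes.S j) k) as [H2|H2];
      destruct (Nat.eqb_spec (Datatypes.S j) 1) as [H3|H3]; destruct (Nat.eqb_spec j k) as [H4|H4]; try lia.
    - subst j. replace (Datatypes.S 1) with 2%nat by lia. auto.
    - replace j with (k - 1)%nat by lia. auto.
    - apply Hqs; lia. }
  assert (Hle : forall j, (1 <= j <= k)%nat -> x j <= d j).
  { intros j Hj. unfold x, d.
    destruct (Nat.eqb_spec j i) as [Hji|Hne]; destruct (Nat.eqb_spec j 1) as [H1|H1];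
      destruct (Nat.eqb_spec j k) as [H2|H2]; try lia;
      first [subst j; lia | apply Hpq; lia]. }
  assert (HmX : forall z, memb Snew z = true <-> exists j, (1 <= j <= k)%nat /\ z = x j).
  { intros z. rewrite memb_spec. unfold Snew. simpl. rewrite filter_In, HinS. unfold x. split.
    - intros [<-|[[j [Hj ->]] Hn]].
      + exists i. rewrite Nat.eqb_refl. split; auto; lia.
      + exists j. split; auto. destruct (Nat.eqb_spec j i) as [->|]; auto.
        rewrite Z.eqb_refl in Hn. discriminate.
    - intros [j [Hj ->]]. destruct (Nat.eqb_spec j i) as [->|Hne]; [left; auto|right].
      split; [exists j; split; auto|].
      destruct (Z.eqb_spec (p j) (p i)); auto. exfalso.
      destruct (Nat.lt_ge_cases j i).
      + pose proof (Ip j i ltac:(lia) ltac:(lia) ltac:(lia)). lia.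
      + pose proof (Ip i j ltac:(lia) ltac:(lia) ltac:(lia)). lia. }
  assert (HmD : forall z, memb D z = true <-> exists j, (1 <= j <= k)%nat /\ z = d j).
  { intros z. rewrite memb_spec. unfold D. simpl. rewrite in_app_iff, in_map_iff. simpl. unfold d. split.
    - intros [<-|[[j [<- Hj]]|[<-|[]]]].
      + exists 1%nat. split; [lia|auto].
      + apply in_seq in Hj. exists j.
        destruct (Nat.eqb_spec j 1); destruct (Nat.eqb_spec j k); try lia. 
      + exists k. destruct (Nat.eqb_spec k 1); try lia. rewrite Nat.eqb_refl. split; [lia|reflexivity].
    - intros [j [Hj ->]].
      destruct (Nat.eqb_spec j 1); [left; auto|]. destruct (Nat.eqb_spec j k); [right; right; left; auto|].
      right; left. exists j; split; auto. apply in_seq; lia. }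
  assert (Hx1 : x 1%nat = a) by (unfold x; destruct (Nat.eqb_spec 1 i); [lia|auto]).
  assert (Hxk : x k = b) by (unfold x; destruct (Nat.eqb_spec k i); [lia|auto]).
  assert (Hd1 : d 1%nat = a) by reflexivity.
  assert (Hdk : d k = b) by (unfold d; destruct (Nat.eqb_spec k 1); [lia|]; rewrite Nat.eqb_refl; auto).
  assert (Hex : exists j, (1 <= j <= k)%nat /\ x j < d j).
  { apply NNPP. intros Hnn. apply Hns. intros z.
    rewrite <- !memb_spec, HmX, HmD. split; intros [j [Hj ->]]; exists j; split; auto;
      destruct (Z.lt_ge_cases (x j) (d j)); try solve [exfalso; apply Hnn; exists j; split; auto];
      pose proof (Hle j Hj); lia. }
  assert (HxR : forall j, (1 <= j <= k)%nat -> a <= x j <= b) by (intros j Hj; exact (x_ge k x a b ltac:(lia) Hx1 Hxk Ix j Hj)).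
  assert (HdR : forall j, (1 <= j <= k)%nat -> a <= d j <= b) by (intros j Hj; exact (d_ge k d a b ltac:(lia) Hd1 Hdk Id j Hj)).
  assert (Emin : forall s, (forall z, memb s z = true <-> exists j, (1 <= j <= k)%nat /\ z = x j) ->
     smin s = a /\ smax s = b).
  { intros s Hs. split; [apply smin_eq|apply smax_eq];
      try (intros y Hy; apply memb_spec, Hs in Hy as [j [Hj ->]]; pose proof (HxR j Hj); lia);
      apply memb_spec, Hs; [exists 1%nat|exists k]; split; auto; lia. }
  assert (Emin' : forall s, (forall z, memb s z = true <-> exists j, (1 <= j <= k)%nat /\ z = d j) ->
     smin s = a /\ smax s = b).
  { intros s Hs. split; [apply smin_eq|apply smax_eq];
      try (intros y Hy; apply memb_spec, Hs in Hy as [j [Hj ->]]; pose proof (HdR j Hj); lia);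
      apply memb_spec, Hs; [exists 1%nat|exists k]; split; auto; lia. }
  destruct (Emin Snew HmX) as [E1 E2]. destruct (Emin' D HmD) as [E3 E4].
  unfold lamA, lamB, slen in *. rewrite E1, E2. rewrite E3, E4 in HD.
  assert (k1 : (1 <= k)%nat) by lia.
  eapply lex_trans; [exact (sideB k x d _ _ a b k1 Hx1 Hd1 Hxk Hdk Ix Id Hle Hex HmX HmD)|].
  eapply lexle_lt; [exact HD|].
  exact (sideA k x d _ _ a b k1 Hx1 Hd1 Hxk Hdk Ix Id Hle Hex HmX HmD).
Qed.
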